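(* Let $L\in\{1,2\}$, ${\bf A}\in\mathbb R^{M\times N}$, ${\bf b}\in\mathbb R^M$, $\tilde\eta>0$, and let $(r,{\bf u})$ follow the weight-normalized gradient flow with $(\eta_r,\eta_{\bf u})=(\tilde\eta,1)$, $r_0>0$, ${\bf u}_0>0$. If all entries of ${\bf u}(t)$ are bounded away from zero uniformly in $t\ge0$, then $r(t)$ is bounded above uniformly in $t\ge0$.
   Context: Loss: $\mathcal L({\bf x})=\frac{1}{2L}\|{\bf A}{\bf x}^{\odot L}-{\bf b}\|_2^2$ ($\odot$ = entrywise power). Weight-normalized loss $\tilde{\mathcal L}(r,{\bf u})=\mathcal L\big(\frac{r}{\|{\bf u}\|_2}{\bf u}\big)$ for $r\in\mathbb R$, ${\bf u}\in\mathbb R^N\setminus\{0\}$. Weight-normalized gradient flow: $\partial_t r=-\eta_r\nabla_r\tilde{\mathcal L}(r,{\bf u})$, $\partial_t{\bf u}=-\eta_{\bf u}\nabla_{\bf u}\tilde{\mathcal L}(r,{\bf u})$, $r(0)=r_0$, ${\bf u}(0)={\bf u}_0$. *)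

(* Defs.v *)
From Stdlib Require Import Reals Lra.
From Coquelicot Require Import Coquelicot.
Open Scope R_scope.

Fixpoint fsum (n : nat) (f : nat -> R) : R :=
  match n with
  | O => 0
  | S k => fsum k f + f k
  end.

(* Vectors in R^N are functions nat -> R (only indices < N matter);
   the matrix A in R^{M x N} is A : nat -> nat -> R, entry A i j. *)

Definition loss (L M N : nat) (A : nat -> nat -> R) (b : nat -> R)
  (x : nat -> R) : R :=
  / (2 * INR L) *
  fsum M (fun i => (fsum N (fun j => A i j * x j ^ L) - b i) ^ 2).

Definition norm2 (N : nat) (u : nat -> R) : R :=
  sqrt (fsum N (fun j => u j ^ 2)).

Definition wn_loss (L M N : nat) (A : nat -> nat -> R) (b : nat -> R)
  (r : R) (u : nat -> R) : R :=
  loss L M N A b (fun j => r / norm2 N u * u j).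

Definition upd (u : nat -> R) (j : nat) (s : R) : nat -> R :=
  fun k => if Nat.eqb k j then s else u k.

Definition wn_flow (L M N : nat) (A : nat -> nat -> R) (b : nat -> R)
  (eta_r eta_u : R) (r : R -> R) (u : R -> nat -> R)
  (r0 : R) (u0 : nat -> R) : Prop :=
  r 0 = r0 /\
  (forall j, (j < N)%nat -> u 0 j = u0 j) /\
  filterlim r (at_right 0) (locally (r 0)) /\
  (forall j, (j < N)%nat ->
     filterlim (fun t => u t j) (at_right 0) (locally (u 0 j))) /\
  (forall t, 0 < t -> exists g,
     is_derive (fun s => wn_loss L M N A b s (u t)) (r t) g /\
     is_derive r t (- eta_r * g)) /\
  (forall t j, 0 < t -> (j < N)%nat -> exists g,
     is_derive (fun s => wn_loss L M N A b (r t) (upd (u t) j s)) (u t j) g /\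
     is_derive (fun tau => u tau j) t (- eta_u * g)).

(* Main.v *)
Require Import Defs.
From Stdlib Require Import Reals.
From Coquelicot Require Import Coquelicot.
Open Scope R_scope.

Module LA.
From HB Require Import structures.
From mathcomp Require Import all_boot all_algebra.
From mathcomp Require Import Rstruct.
Import GRing.Theory.
Local Open Scope ring_scope.

Lemma fsum_big n (f : nat -> R) : fsum n f = \sum_(k < n) f k.
Proof.
elim: n => [|n IH] /=; first by rewrite big_ord0.
by rewrite big_ord_recr /= IH.
Qed.

Lemma ginv (M N : nat) (A : nat -> nat -> R) : exists G : nat -> nat -> R,
  forall i j, (i < M)%coq_nat -> (j < N)%coq_nat ->
  fsum N (fun k => A i k * fsum M (fun l => G k l * A l j)) = A i j.
Proof.
pose A' : 'M[R]_(M, N) := \matrix_(i, j) A i j.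
pose G' := pinvmx A'.
exists (fun k l => match (k < N)%N =P true, (l < M)%N =P true with
   | ReflectT hk, ReflectT hl => G' (Ordinal hk) (Ordinal hl) | _, _ => 0 end).
move=> i j /ltP hi /ltP hj.
have E : A' *m (G' *m A') = A' by rewrite mulmxA mulmxKpV.
clearbody G'.
have := congr1 (fun B : 'M[R]_(M, N) => B (Ordinal hi) (Ordinal hj)) E.
rewrite /= !mxE => <-.
rewrite fsum_big; apply: eq_bigr => k _.
rewrite mxE /= fsum_big !mxE; congr (_ * _).
apply: eq_bigr => l _ /=; rewrite mxE.
case: ((k < N)%N =P true) => [hk|]; last by rewrite ltn_ord.
case: ((l < M)%N =P true) => [hl|]; last by rewrite ltn_ord.
by congr (G' _ _ * _); exact: val_inj.
Qed.
End LA.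

From Stdlib Require Import Lra Lia Classical FunctionalExtensionality.
Open Scope R_scope.


Lemma fsum_ext n f g : (forall k, (k < n)%nat -> f k = g k) -> fsum n f = fsum n g.
Proof. induction n; simpl; intros H; auto. rewrite IHn; [rewrite H|]; auto; intros; apply H; lia. Qed.
Lemma fsum_plus n f g : fsum n (fun k => f k + g k) = fsum n f + fsum n g.
Proof. induction n; simpl; [lra|]. rewrite IHn; lra. Qed.
Lemma fsum_minus n f g : fsum n (fun k => f k - g k) = fsum n f - fsum n g.
Proof. induction n; simpl; [lra|]. rewrite IHn; lra. Qed.
Lemma fsum_scal n c f : fsum n (fun k => c * f k) = c * fsum n f.
Proof. induction n; simpl; [lra|]. rewrite IHn; lra. Qed.
Lemma fsum_scalr n c f : fsum n (fun k => f k * c) = fsum n f * c.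
Proof. induction n; simpl; [lra|]. rewrite IHn; lra. Qed.
Lemma fsum_zero n f : (forall k, (k < n)%nat -> f k = 0) -> fsum n f = 0.
Proof. intros H. rewrite (fsum_ext n f (fun _ => 0)) by auto. clear H; induction n; simpl; [|rewrite IHn]; lra. Qed.
Lemma fsum_le n f g : (forall k, (k < n)%nat -> f k <= g k) -> fsum n f <= fsum n g.
Proof. induction n; simpl; intros H; [lra|]. pose proof (H n ltac:(lia)). assert (fsum n f <= fsum n g) by (apply IHn; intros; apply H; lia). lra. Qed.
Lemma fsum_nonneg n f : (forall k, (k < n)%nat -> 0 <= f k) -> 0 <= fsum n f.
Proof. intros H. replace 0 with (fsum n (fun _ => 0)). apply fsum_le; intros; apply H; auto. apply fsum_zero; auto. Qed.
Lemma fsum_abs n f : Rabs (fsum n f) <= fsum n (fun k => Rabs (f k)).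
Proof. induction n; simpl. rewrite Rabs_R0; lra. eapply Rle_trans. apply Rabs_triang. lra. Qed.
Lemma fsum_term n f j : (forall k, (k < n)%nat -> 0 <= f k) -> (j < n)%nat -> f j <= fsum n f.
Proof. induction n; simpl; intros H Hj; [lia|]. destruct (Nat.eq_dec j n).
 subst. assert (0 <= fsum n f) by (apply fsum_nonneg; intros; apply H; lia). lra.
 assert (f j <= fsum n f) by (apply IHn; [intros; apply H; lia| lia]). pose proof (H n ltac:(lia)). lra. Qed.
Lemma fsum_swap n m (F : nat -> nat -> R) :
  fsum n (fun i => fsum m (fun j => F i j)) = fsum m (fun j => fsum n (fun i => F i j)).
Proof. induction n; simpl. symmetry; apply fsum_zero; auto. rewrite IHn, <- fsum_plus. reflexivity. Qed.
Lemma fsum_delta n j a : (j < n)%nat -> fsum n (fun k => if Nat.eqb k j then a k else 0) = a j.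
Proof. induction n; simpl; intros Hj; [lia|]. destruct (Nat.eqb_spec n j).
 subst. rewrite fsum_zero. lra. intros k Hk. destruct (Nat.eqb_spec k j); [lia|auto].
 rewrite IHn by lia. lra. Qed.
Lemma fsum_const n c : fsum n (fun _ => c) = INR n * c.
Proof. induction n; simpl fsum. simpl; lra. rewrite IHn, S_INR; lra. Qed.

Lemma is_derive_fsum n (F : R -> nat -> R) x dF :
  (forall k, (k < n)%nat -> is_derive (fun s => F s k) x (dF k)) ->
  is_derive (fun s => fsum n (F s)) x (fsum n dF).
Proof. induction n; simpl; intros H.
 exact (@is_derive_const R_AbsRing R_NormedModule 0 x).
 apply (is_derive_plus (fun s => fsum n (F s)) (fun s => F s n)); auto.
Qed.

Lemma lim_plus (F : (R -> Prop) -> Prop) {FF : Filter F} (f g : R -> R) (a b : R) :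
  filterlim f F (locally a) -> filterlim g F (locally b) -> filterlim (fun x => f x + g x) F (locally (a+b)).
Proof. intros. eapply filterlim_comp_2; eauto. apply (filterlim_plus a b). Qed.
Lemma lim_mult (F : (R -> Prop) -> Prop) {FF : Filter F} (f g : R -> R) (a b : R) :
  filterlim f F (locally a) -> filterlim g F (locally b) -> filterlim (fun x => f x * g x) F (locally (a*b)).
Proof. intros. eapply filterlim_comp_2; eauto. apply (filterlim_mult a b). Qed.
Lemma lim_fsum (F : (R -> Prop) -> Prop) {FF : Filter F} n (G : R -> nat -> R) a :
  (forall k, (k < n)%nat -> filterlim (fun x => G x k) F (locally (a k))) ->
  filterlim (fun x => fsum n (G x)) F (locally (fsum n a)).
Proof. induction n; simpl; intros H. apply filterlim_const. apply lim_plus; auto. Qed.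
Lemma lim_comp (F : (R -> Prop) -> Prop) {FF : Filter F} (f g : R -> R) (a : R) :
  filterlim f F (locally a) -> ex_derive g a -> filterlim (fun x => g (f x)) F (locally (g a)).
Proof. intros. eapply filterlim_comp; eauto. apply (@ex_derive_continuous R_AbsRing R_NormedModule g a); auto. Qed.
Lemma lim_pow (F : (R -> Prop) -> Prop) {FF : Filter F} (f : R -> R) (a : R) n :
  filterlim f F (locally a) -> filterlim (fun x => f x ^ n) F (locally (a ^ n)).
Proof. intros. apply (lim_comp F f (fun y => y ^ n)); auto. eexists. apply is_derive_pow, is_derive_id. Qed.

Lemma nonincr_on (f df : R -> R) (a b : R) : a < b -> (forall x, a <= x <= b -> is_derive f x (df x)) ->
  (forall x, a <= x <= b -> df x <= 0) -> f b <= f a.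
Proof. intros Hab Hd Hn. destruct (MVT_gen f a b df) as [c [Hc E]].
 rewrite Rmin_left, Rmax_right by lra. intros; apply Hd; lra.
 rewrite Rmin_left, Rmax_right by lra. intros x Hx. apply continuity_pt_filterlim.
  apply (@ex_derive_continuous R_AbsRing R_NormedModule). eexists; apply Hd; lra.
 rewrite Rmin_left, Rmax_right in Hc by lra. pose proof (Hn c Hc). nra. Qed.

Lemma nonincr_from0 (f df : R -> R) : filterlim f (at_right 0) (locally (f 0)) ->
  (forall t, 0 < t -> is_derive f t (df t)) -> (forall t, 0 < t -> df t <= 0) ->
  forall t, 0 < t -> f t <= f 0.
Proof. intros Hl Hd Hn t Ht. destruct (Rle_or_lt (f t) (f 0)) as [|H]; auto. exfalso.
 pose proof (proj1 (@filterlim_locally R R_UniformSpace (at_right 0) _ f (f 0)) Hl) as Hl2; clear Hl; rename Hl2 into Hl. destruct (Hl (mkposreal _ (proj2 (Rlt_0_minus _ _) H))) as [d Hdl].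
 set (tau := Rmin (d/2) (t/2)). assert (0 < tau) by (unfold tau; destruct d; apply Rmin_pos; simpl; lra).
 assert (tau < t) by (unfold tau; assert (Rmin (d/2) (t/2) <= t/2) by apply Rmin_r; lra).
 assert (Hb : ball 0 d tau). { unfold ball; simpl; unfold AbsRing_ball, abs, minus, plus, opp; simpl.
   rewrite Ropp_0, Rplus_0_r, Rabs_pos_eq by lra. unfold tau. destruct d; simpl. assert (Rmin (pos/2) (t/2) <= pos/2) by apply Rmin_l. lra. }
 specialize (Hdl tau Hb H0). unfold ball in Hdl; simpl in Hdl; unfold AbsRing_ball, abs, minus, plus, opp in Hdl; simpl in Hdl.
 assert (f t <= f tau) by (apply (nonincr_on f df); auto; intros; [apply Hd|apply Hn]; lra).
 apply Rabs_lt_between in Hdl. lra. Qed.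

Lemma const_from0 (f : R -> R) : filterlim f (at_right 0) (locally (f 0)) ->
  (forall t, 0 < t -> is_derive f t 0) -> forall t, 0 < t -> f t = f 0.
Proof. intros Hl Hd t Ht. apply Rle_antisym.
 apply (nonincr_from0 f (fun _ => 0)); [exact Hl|exact Hd|intros; lra|exact Ht].
 assert (- f t <= - f 0); [|lra].
 apply (nonincr_from0 (fun x => - f x) (fun _ => - 0)); [| |intros; lra|exact Ht].
 - change (filterlim (fun x => Ropp (f x)) (at_right 0) (locally (Ropp (f 0)))).
   apply (lim_comp (at_right 0) f Ropp (f 0) Hl). exists (-1). auto_derive; auto; lra.
 - intros x Hx. specialize (Hd x Hx). auto_derive_fun f. intros Hf. apply is_derive_Reals. apply is_derive_Reals in Hd. replace (-0) with (-(0)) by lra. apply derivable_pt_lim_opp; auto.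
 Qed.


Lemma D_eq (f : R -> R) x a b : is_derive f x a -> a = b -> is_derive f x b.
Proof. intros H ->; exact H. Qed.
Lemma D_plus (f g : R -> R) x a b : is_derive f x a -> is_derive g x b -> is_derive (fun s => f s + g s) x (a + b).
Proof. rewrite !is_derive_Reals; intros; apply derivable_pt_lim_plus; auto. Qed.
Lemma D_minus (f g : R -> R) x a b : is_derive f x a -> is_derive g x b -> is_derive (fun s => f s - g s) x (a - b).
Proof. rewrite !is_derive_Reals; intros; apply derivable_pt_lim_minus; auto. Qed.
Lemma D_mult (f g : R -> R) x a b : is_derive f x a -> is_derive g x b -> is_derive (fun s => f s * g s) x (a * g x + f x * b).
Proof. rewrite !is_derive_Reals; intros. apply (derivable_pt_lim_mult f g x a b); auto. Qed.
Lemma D_const (c x : R) : is_derive (fun _ => c) x 0.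
Proof. rewrite is_derive_Reals; apply derivable_pt_lim_const. Qed.
Lemma D_id (x : R) : is_derive (fun s => s) x 1.
Proof. rewrite is_derive_Reals; apply derivable_pt_lim_id. Qed.
Lemma D_scal (f : R -> R) c x a : is_derive f x a -> is_derive (fun s => c * f s) x (c * a).
Proof. intros H. replace (c*a) with (0 * f x + c * a) by ring. apply (D_mult (fun _ => c) f); [apply D_const|exact H]. Qed.
Lemma D_pow (f : R -> R) n x a : is_derive f x a -> is_derive (fun s => f s ^ n) x (INR n * f x ^ (pred n) * a).
Proof. intros H. replace (INR n * f x ^ (pred n) * a) with (INR n * a * f x ^ pred n) by ring. apply (is_derive_pow f n x a H). Qed.
Lemma D_fsum n (F : R -> nat -> R) x dF :
  (forall k, (k < n)%nat -> is_derive (fun s => F s k) x (dF k)) ->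
  is_derive (fun s => fsum n (F s)) x (fsum n dF).
Proof. induction n; simpl; intros H. apply D_const.
 apply (D_plus (fun s => fsum n (F s)) (fun s => F s n)); auto. Qed.

Definition ev L N (A : nat -> nat -> R) (b : nat -> R) (x : nat -> R) i :=
  fsum N (fun j => A i j * x j ^ L) - b i.
Definition grd L M N A b x k := x k ^ (pred L) * fsum M (fun i => ev L N A b x i * A i k).

Lemma loss_eq L M N A b x : loss L M N A b x = / (2 * INR L) * fsum M (fun i => (ev L N A b x i) ^ 2).
Proof. reflexivity. Qed.

Lemma loss_derive L M N A b (X : R -> nat -> R) s0 dX : L <> 0%nat ->
  (forall k, (k < N)%nat -> is_derive (fun s => X s k) s0 (dX k)) ->
  is_derive (fun s => loss L M N A b (X s)) s0
    (fsum N (fun k => grd L M N A b (X s0) k * dX k)).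
Proof. intros HL Hd. unfold loss.
 eapply D_eq. apply D_scal. apply D_fsum. intros i Hi.
 apply D_pow. apply D_minus. apply D_fsum. intros j Hj. apply D_scal. apply D_pow. apply Hd; exact Hj.
 apply D_const.
 assert (INR L <> 0) by (apply not_0_INR; auto).
 unfold grd. fold (ev L N A b (X s0)).
 transitivity (fsum M (fun i => fsum N (fun j => ev L N A b (X s0) i * A i j * (X s0 j ^ pred L * dX j)))).
 - rewrite <- fsum_scal. apply fsum_ext. intros i Hi. rewrite Rminus_0_r.
   rewrite (fsum_ext N (fun j => A i j * (INR L * X s0 j ^ pred L * dX j)) (fun j => INR L * (A i j * (X s0 j ^ pred L * dX j)))) by (intros; ring).
   rewrite fsum_scal.
   rewrite (fsum_ext N (fun j => ev L N A b (X s0) i * A i j * (X s0 j ^ pred L * dX j)) (fun j => ev L N A b (X s0) i * (A i j * (X s0 j ^ pred L * dX j)))) by (intros; ring).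
   rewrite fsum_scal. unfold ev. replace (INR 2) with 2 by (simpl; ring). simpl pred. field. auto.
 - rewrite fsum_swap. apply fsum_ext; intros k Hk.
   rewrite (fsum_ext M _ (fun i => (X s0 k ^ pred L * dX k) * (ev L N A b (X s0) i * A i k))) by (intros; ring).
   rewrite fsum_scal. ring.
Qed.


Lemma upd_sq_sum N U j s : (j < N)%nat ->
  fsum N (fun k => upd U j s k ^ 2) = fsum N (fun k => U k ^ 2) - U j ^ 2 + s ^ 2.
Proof. induction N; cbn [fsum]; intros Hj; [lia|]. destruct (Nat.eqb_spec N j).
 - subst. rewrite (fsum_ext j (fun k => upd U j s k ^ 2) (fun k => U k ^ 2)).
   unfold upd; rewrite Nat.eqb_refl. lra.
   intros k Hk. unfold upd. destruct (Nat.eqb_spec k j); [lia|auto].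
 - rewrite IHN by lia. unfold upd. destruct (Nat.eqb_spec N j); [lia|]. lra.
Qed.

Lemma inv_sqrt_derive (Q a : R) : 0 < Q ->
  is_derive (fun s => / sqrt (Q - a ^ 2 + s ^ 2)) a (- a / (Q * sqrt Q)).
Proof. intros HQ. assert (0 < sqrt Q) by (apply sqrt_lt_R0; auto).
 auto_derive; replace (Q - a * (a * 1) + a * (a * 1)) with Q by ring.
 split; [lra|split; [lra|auto]].
 assert (sqrt Q * sqrt Q = Q) by (apply sqrt_sqrt; lra). rewrite H0. field. lra.
Qed.

Definition xv N rr (U : nat -> R) := fun k => rr / norm2 N U * U k.

Lemma dr_lemma L M N A b rr U : L <> 0%nat -> norm2 N U <> 0 ->
  is_derive (fun s => wn_loss L M N A b s U) rr
    (fsum N (fun k => grd L M N A b (xv N rr U) k * (U k / norm2 N U))).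
Proof. intros HL Hn. unfold wn_loss.
 apply (loss_derive L M N A b (fun s k => s / norm2 N U * U k) rr (fun k => U k / norm2 N U) HL).
 intros k Hk. auto_derive; [auto|field; auto].
Qed.

Lemma du_lemma L M N A b rr U j : L <> 0%nat -> (j < N)%nat -> 0 < fsum N (fun k => U k ^ 2) ->
  is_derive (fun s => wn_loss L M N A b rr (upd U j s)) (U j)
    (fsum N (fun k => grd L M N A b (xv N rr U) k *
       (rr / norm2 N U * (if Nat.eqb k j then 1 else 0)
        - rr * U k * U j / (fsum N (fun k => U k ^ 2) * norm2 N U)))).
Proof. intros HL Hj HQ. set (Q := fsum N (fun k => U k ^ 2)) in *.
 assert (HX : (fun k => rr / norm2 N (upd U (j) (U j)) * upd U j (U j) k) = xv N rr U).
 { assert (E : upd U j (U j) = U). { apply functional_extensionality; intros k; unfold upd.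
     destruct (Nat.eqb_spec k j); subst; auto. }
   rewrite E. reflexivity. }
 unfold wn_loss. rewrite <- HX.
 apply (loss_derive L M N A b (fun s k => rr / norm2 N (upd U j s) * upd U j s k) (U j) _ HL).
 intros k Hk.
 assert (Hn : forall s, norm2 N (upd U j s) = sqrt (Q - U j ^ 2 + s ^ 2)).
 { intros s. unfold norm2. rewrite upd_sq_sum by auto. reflexivity. }
 assert (Hr : norm2 N U = sqrt Q) by reflexivity.
 pose proof (inv_sqrt_derive Q (U j) HQ) as Hd.
 rewrite Hr.
 destruct (Nat.eqb_spec k j).
 - subst k. apply (is_derive_ext (fun s => rr / sqrt (Q - U j ^ 2 + s ^ 2) * s)).
   { intros s. rewrite Hn. unfold upd. rewrite Nat.eqb_refl. reflexivity. }
   eapply D_eq. apply (D_mult (fun s => rr / sqrt (Q - U j ^ 2 + s ^ 2)) (fun s => s)).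
   unfold Rdiv. apply (D_scal (fun s => / sqrt (Q - U j ^ 2 + s ^ 2))). exact Hd. apply D_id.
   replace (Q - U j ^ 2 + U j ^ 2) with Q by ring. assert (0 < sqrt Q) by (apply sqrt_lt_R0; auto).
   match goal with |- ?a = ?b => change (@eq R a b) end. field. split; lra.
 - apply (is_derive_ext (fun s => rr / sqrt (Q - U j ^ 2 + s ^ 2) * U k)).
   { intros s. rewrite Hn. unfold upd. destruct (Nat.eqb_spec k j); [lia|]. reflexivity. }
   eapply D_eq. apply (D_mult (fun s => rr / sqrt (Q - U j ^ 2 + s ^ 2)) (fun s => U k)).
   unfold Rdiv. apply (D_scal (fun s => / sqrt (Q - U j ^ 2 + s ^ 2))). exact Hd. apply D_const.
   assert (0 < sqrt Q) by (apply sqrt_lt_R0; auto).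
   match goal with |- ?a = ?b => change (@eq R a b) end. replace (Q - U j ^ 2 + U j ^ 2) with Q by ring. field. split; lra.
Qed.


Lemma CS N (G U : nat -> R) : 0 < fsum N (fun k => U k ^ 2) ->
  (fsum N (fun k => G k * U k)) ^ 2 <= fsum N (fun k => G k ^ 2) * fsum N (fun k => U k ^ 2).
Proof. intros HQ. set (Q := fsum N (fun k => U k ^ 2)) in *. set (T := fsum N (fun k => G k * U k)).
 assert (H : 0 <= fsum N (fun k => (G k * Q - U k * T) ^ 2)) by (apply fsum_nonneg; intros; apply pow2_ge_0).
 rewrite (fsum_ext N _ (fun k => (Q^2) * G k ^ 2 + (- 2 * Q * T) * (G k * U k) + T^2 * U k ^ 2)) in H by (intros; ring).
 rewrite !fsum_plus, !fsum_scal in H. fold Q T in H.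
 assert (0 <= Q * (fsum N (fun k => G k ^ 2) * Q - T^2)) by nra.
 apply Rmult_le_reg_l with Q; auto. nra.
Qed.

Lemma D_exp (f : R -> R) x a : is_derive f x a -> is_derive (fun s => exp (f s)) x (exp (f x) * a).
Proof. rewrite !is_derive_Reals. intros H.
 apply (derivable_pt_lim_comp f exp). exact H. apply derivable_pt_lim_exp. Qed.
Lemma D_ln (f : R -> R) x a : 0 < f x -> is_derive f x a -> is_derive (fun s => ln (f s)) x (a / f x).
Proof. rewrite !is_derive_Reals. intros Hp H. unfold Rdiv. replace (a * / f x) with (/ f x * a) by ring.
 apply (derivable_pt_lim_comp f ln). exact H. apply derivable_pt_lim_ln; auto. Qed.

Lemma kernel_sum M N (A : nat -> nat -> R) (z e : nat -> R) :
  (forall i, (i < M)%nat -> fsum N (fun j => A i j * z j) = 0) ->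
  fsum N (fun j => z j * fsum M (fun i => e i * A i j)) = 0.
Proof. intros H. rewrite (fsum_ext N _ (fun j => fsum M (fun i => e i * (A i j * z j)))).
 rewrite fsum_swap. apply fsum_zero. intros i Hi. rewrite fsum_scal, H; auto; ring.
 intros j Hj. rewrite <- fsum_scal. apply fsum_ext. intros; ring. Qed.

Ltac req := match goal with |- ?a = ?b => change (@eq R a b) end.

Section Flow.
Variables (L M N : nat) (A : nat -> nat -> R) (b : nat -> R) (eta : R)
  (r : R -> R) (u : R -> nat -> R).
Hypothesis HL : L <> 0%nat.
Hypothesis Hr : forall t, 0 < t -> exists g,
     is_derive (fun s => wn_loss L M N A b s (u t)) (r t) g /\
     is_derive r t (- eta * g).
Hypothesis Hu : forall t j, 0 < t -> (j < N)%nat -> exists g,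
     is_derive (fun s => wn_loss L M N A b (r t) (upd (u t) j s)) (u t j) g /\
     is_derive (fun tau => u tau j) t (- 1 * g).
Hypothesis HQpos : forall t, 0 < t -> 0 < fsum N (fun k => u t k ^ 2).

Definition Qf t := fsum N (fun k => u t k ^ 2).
Definition Gf t k := grd L M N A b (xv N (r t) (u t)) k.
Definition Tf t := fsum N (fun k => Gf t k * u t k).

Lemma rho_sq t : 0 < t -> norm2 N (u t) * norm2 N (u t) = Qf t.
Proof. intros Ht. apply sqrt_sqrt. pose proof (HQpos t Ht). unfold Qf; lra. Qed.
Lemma rho_pos t : 0 < t -> 0 < norm2 N (u t).
Proof. intros Ht. apply sqrt_lt_R0. apply HQpos; auto. Qed.

Lemma r_deriv t : 0 < t -> is_derive r t (- eta * (Tf t / norm2 N (u t))).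
Proof. intros Ht. destruct (Hr t Ht) as [g [H1 H2]].
 pose proof (dr_lemma L M N A b (r t) (u t) HL (Rgt_not_eq _ _ (rho_pos t Ht))) as H3.
 pose proof (is_derive_unique _ _ _ H1) as E1. pose proof (is_derive_unique _ _ _ H3) as E3.
 rewrite E1 in E3. clear E1. subst g. eapply D_eq; [exact H2|].
 match goal with |- ?a = ?b => change (@eq R a b) end.
 unfold Tf, Rdiv. rewrite <- (fsum_scalr N (/ norm2 N (u t))). f_equal.
 apply fsum_ext. intros k Hk. unfold Gf. ring.
Qed.

Lemma u_deriv t j : 0 < t -> (j < N)%nat -> is_derive (fun tau => u tau j) t
  (- (r t / norm2 N (u t) * Gf t j - r t * u t j / (Qf t * norm2 N (u t)) * Tf t)).
Proof. intros Ht Hj. destruct (Hu t j Ht Hj) as [g [H1 H2]].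
 pose proof (du_lemma L M N A b (r t) (u t) j HL Hj (HQpos t Ht)) as H3.
 pose proof (is_derive_unique _ _ _ H1) as E1. pose proof (is_derive_unique _ _ _ H3) as E3.
 rewrite E1 in E3. clear E1. subst g. eapply D_eq; [exact H2|].
 match goal with |- ?a = ?b => change (@eq R a b) end.
 rewrite (fsum_ext N (fun k => grd L M N A b (xv N (r t) (u t)) k *
       (r t / norm2 N (u t) * (if Nat.eqb k j then 1 else 0)
        - r t * u t k * u t j / (fsum N (fun k => u t k ^ 2) * norm2 N (u t)))) (fun k => (r t / norm2 N (u t)) * (if Nat.eqb k j then Gf t k else 0)
    - (r t * u t j / (fsum N (fun k => u t k ^ 2) * norm2 N (u t))) * (Gf t k * u t k))).
 rewrite fsum_minus, !fsum_scal, fsum_delta by auto. unfold Tf, Qf. ring.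
 intros k Hk. unfold Gf. destruct (Nat.eqb k j); cbv iota; unfold Rdiv; ring.
Qed.

Lemma Q_deriv t : 0 < t -> is_derive Qf t 0.
Proof. intros Ht. unfold Qf.
 eapply D_eq. apply (D_fsum N (fun s k => u s k ^ 2)). intros k Hk. apply D_pow. apply u_deriv; auto.
 set (a := r t / norm2 N (u t)). set (c := r t / (Qf t * norm2 N (u t))).
 rewrite (fsum_ext N _ (fun k => (-2 * a) * (Gf t k * u t k) + (2 * c * Tf t) * (u t k ^ 2))).
 rewrite fsum_plus, !fsum_scal. fold (Tf t) (Qf t). unfold c.
 pose proof (rho_pos t Ht). pose proof (HQpos t Ht). fold (Qf t) in H0. unfold a, Rdiv. req. field. lra.
 intros k Hk. simpl INR. simpl pred. unfold c, a, Rdiv. ring.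
Qed.

Variable rho0 : R.
Hypothesis Hrho : forall t, 0 < t -> norm2 N (u t) = rho0.
Hypothesis Hrho0 : 0 < rho0.
Hypothesis Heta : 0 < eta.

Lemma Qf_rho t : 0 < t -> Qf t = rho0 * rho0.
Proof. intros Ht. rewrite <- rho_sq, Hrho; auto. Qed.

Definition ell tau := loss L M N A b (fun k => r tau / rho0 * u tau k).

Lemma ell_deriv t : 0 < t -> exists d, is_derive ell t d /\ d <= 0.
Proof. intros Ht. pose proof (Qf_rho t Ht) as HQ. pose proof (Hrho t Ht) as Hn.
 eexists. split. unfold ell.
 eapply (loss_derive L M N A b (fun s k => r s / rho0 * u s k) t _ HL).
 intros k Hk. unfold Rdiv. apply (D_mult (fun s => r s * / rho0) (fun s => u s k)).
 apply (D_mult r (fun _ => / rho0)). apply r_deriv; auto. apply D_const. apply u_deriv; auto.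
 simpl.
 assert (EG : forall k, grd L M N A b (fun k => r t / rho0 * u t k) k = Gf t k).
 { intros k. unfold Gf, xv. rewrite Hn. reflexivity. }
 set (T := Tf t). set (SG := fsum N (fun k => Gf t k ^ 2)).
 rewrite (fsum_ext N _ (fun k => (- eta * T / (rho0 * rho0) + r t * r t * T / (Qf t * rho0 * rho0)) * (Gf t k * u t k) + (- (r t / rho0) ^ 2) * (Gf t k ^ 2))).
 rewrite fsum_plus, !fsum_scal. change (fsum N (fun k : nat => Gf t k * u t k)) with T. fold SG. rewrite HQ.
 assert (HCS : T ^ 2 <= SG * (rho0 * rho0)). { rewrite <- HQ. apply CS. apply HQpos; auto. }
 assert (E : (- eta * T / (rho0 * rho0) + r t * r t * T / (rho0 * rho0 * rho0 * rho0)) * T + - (r t / rho0) ^ 2 * SG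
   = - eta * (T / rho0) ^ 2 - (r t / rho0) ^ 2 / (rho0 * rho0) * (SG * (rho0 * rho0) - T ^ 2)) by (field; lra).
 rewrite E. assert (0 <= (r t / rho0) ^ 2 / (rho0 * rho0)).
 { apply Rmult_le_pos. apply pow2_ge_0. apply Rlt_le, Rinv_0_lt_compat; nra. }
 assert (0 <= (T / rho0) ^ 2) by apply pow2_ge_0. nra.
 intros k Hk. rewrite EG, Hn, HQ. unfold Rdiv. req. field. lra.
Qed.

Definition Wf t j := fsum M (fun i => ev L N A b (xv N (r t) (u t)) i * A i j).

Lemma W_kernel z t : (forall i, (i < M)%nat -> fsum N (fun j => A i j * z j) = 0) ->
  fsum N (fun j => z j * Wf t j) = 0.
Proof. intros H. unfold Wf. apply kernel_sum; auto. Qed.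

Definition Zf (z : nat -> R) tau := fsum N (fun j => z j * u tau j) * exp (r tau ^ 2 / (2 * eta * (rho0 * rho0))).

Lemma Z_deriv z t : L = 1%nat -> (forall i, (i < M)%nat -> fsum N (fun j => A i j * z j) = 0) ->
  0 < t -> is_derive (Zf z) t 0.
Proof. intros HL1 Hz Ht. pose proof (Qf_rho t Ht) as HQ. pose proof (Hrho t Ht) as Hn.
 unfold Zf. eapply D_eq.
 apply (D_mult (fun s => fsum N (fun j => z j * u s j)) (fun s => exp (r s ^ 2 / (2 * eta * (rho0 * rho0))))).
 apply D_fsum; intros j Hj; apply D_scal; apply u_deriv; auto.
 apply D_exp. unfold Rdiv. apply (D_mult (fun s => r s ^ 2) (fun _ => / (2 * eta * (rho0 * rho0)))).
 apply D_pow, r_deriv; auto. apply D_const.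
 assert (HG : fsum N (fun j => z j * Gf t j) = 0).
 { rewrite <- (W_kernel z t Hz). apply fsum_ext. intros j Hj. unfold Gf, grd, Wf. rewrite HL1. simpl. ring. }
 set (T := Tf t). set (SZ := fsum N (fun j => z j * u t j)).
 rewrite (fsum_ext N _ (fun j => (- (r t / norm2 N (u t))) * (z j * Gf t j) + (r t / (Qf t * norm2 N (u t)) * T) * (z j * u t j))).
 rewrite fsum_plus, !fsum_scal, HG. fold SZ. rewrite Hn, HQ. simpl INR. simpl pred. req. field. lra.
 intros j Hj. unfold Rdiv. req. ring.
Qed.

Definition Yf (z : nat -> R) tau := fsum N (fun j => z j * ln (u tau j ^ 2)) + fsum N z * (r tau ^ 2 / (eta * (rho0 * rho0))).

Lemma Y_deriv z t : L = 2%nat -> (forall i, (i < M)%nat -> fsum N (fun j => A i j * z j) = 0) ->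
  (forall j, (j < N)%nat -> u t j <> 0) ->
  0 < t -> is_derive (Yf z) t 0.
Proof. intros HL2 Hz Hnz Ht. pose proof (Qf_rho t Ht) as HQ. pose proof (Hrho t Ht) as Hn.
 unfold Yf. eapply D_eq.
 apply (D_plus (fun s => fsum N (fun j => z j * ln (u s j ^ 2))) (fun s => fsum N z * (r s ^ 2 / (eta * (rho0 * rho0))))).
 apply D_fsum; intros j Hj; apply D_scal. apply D_ln. pose proof (Hnz j Hj). apply pow2_gt_0; auto.
 apply D_pow, u_deriv; auto.
 apply D_scal. unfold Rdiv. apply (D_mult (fun s => r s ^ 2) (fun _ => / (eta * (rho0 * rho0)))).
 apply D_pow, r_deriv; auto. apply D_const.
 set (T := Tf t).
 rewrite (fsum_ext N _ (fun j => (-2 * (r t / rho0) ^ 2) * (z j * Wf t j) + (2 * r t * T / (rho0 * rho0 * rho0)) * z j)).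
 rewrite fsum_plus, !fsum_scal, W_kernel by auto. simpl INR. simpl pred. rewrite Hn. req. field. lra.
 intros j Hj. pose proof (Hnz j Hj).
 assert (EW : fsum M (fun i => ev 2 N A b (fun k => r t / rho0 * u t k) i * A i j) = Wf t j)
   by (unfold Wf, xv; rewrite HL2, Hn; reflexivity).
 unfold Gf, grd. rewrite HL2, HQ. unfold xv. rewrite Hn, EW. simpl INR. simpl pred. req. field. lra.
Qed.
End Flow.


Lemma lim_minus (F : (R -> Prop) -> Prop) {FF : Filter F} (f g : R -> R) (a b : R) :
  filterlim f F (locally a) -> filterlim g F (locally b) -> filterlim (fun x => f x - g x) F (locally (a - b)).
Proof. intros Hf Hg. unfold Rminus. apply lim_plus; auto.
 apply (lim_comp F g Ropp b Hg). exists (-1). auto_derive; auto; lra. Qed.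
Lemma lim_const (F : (R -> Prop) -> Prop) {FF : Filter F} (c : R) : filterlim (fun _ => c) F (locally c).
Proof. apply filterlim_const. Qed.

Lemma fsum_abs_le n f B : (forall k, (k < n)%nat -> Rabs (f k) <= B) -> Rabs (fsum n f) <= INR n * B.
Proof. intros H. eapply Rle_trans. apply fsum_abs. rewrite <- fsum_const. apply fsum_le; auto. Qed.

Lemma ln_bound a x b : 0 < a -> a <= x -> x <= b -> Rabs (ln x) <= Rabs (ln a) + Rabs (ln b).
Proof. intros Ha H1 H2. assert (ln a <= ln x) by (destruct H1; [apply Rlt_le, ln_increasing; auto|subst; lra]).
 assert (ln x <= ln b) by (destruct H2; [apply Rlt_le, ln_increasing; lra|subst; lra]).
 unfold Rabs; repeat destruct Rcase_abs; lra. Qed.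

Lemma le_sq (x : R) : x <= 1 + x ^ 2.
Proof. nra. Qed.

Lemma sq_bound (e E : R) : e ^ 2 <= E -> Rabs e <= 1 + E.
Proof. intros H. unfold Rabs; destruct Rcase_abs; nra. Qed.

Lemma dbl M N c (g : nat -> R) (h : nat -> nat -> R) (y : nat -> R) :
  c * fsum M (fun l => g l * fsum N (fun m => h l m * y m)) = fsum N (fun m => c * fsum M (fun l => g l * h l m) * y m).
Proof. rewrite <- fsum_scal.
 rewrite (fsum_ext M (fun l => c * (g l * fsum N (fun m => h l m * y m))) (fun l => fsum N (fun m => c * g l * h l m * y m))).
 rewrite fsum_swap. apply fsum_ext. intros m Hm.
 transitivity (c * y m * fsum M (fun l => g l * h l m)); [rewrite <- fsum_scal; apply fsum_ext; intros; ring | ring].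
 intros l Hl. rewrite <- fsum_scal, <- fsum_scal. apply fsum_ext; intros; ring. Qed.

Lemma kvec M N (A : nat -> nat -> R) (G : nat -> nat -> R) :
  (forall i j, (i < M)%nat -> (j < N)%nat ->
    fsum N (fun k => A i k * fsum M (fun l => G k l * A l j)) = A i j) ->
  exists eps, 0 < eps /\ forall y : nat -> R,
    (forall i, (i < M)%nat -> Rabs (fsum N (fun j => A i j * y j)) <= eps) ->
    exists k : nat -> R, (forall i, (i < M)%nat -> fsum N (fun j => A i j * k j) = 0) /\
      (forall j, (j < N)%nat -> Rabs (k j - y j) <= / (2 * (INR N + 1))).
Proof. intros HG.
 set (Gs := fsum N (fun k => fsum M (fun l => Rabs (G k l)))).
 assert (HGs : 0 <= Gs) by (apply fsum_nonneg; intros; apply fsum_nonneg; intros; apply Rabs_pos).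
 assert (HN : 0 <= INR N) by apply pos_INR.
 exists (/ (2 * (INR N + 1) * (Gs + 1))). split. apply Rinv_0_lt_compat. nra.
 intros y Hy. set (p := fun i => fsum N (fun j => A i j * y j)).
 exists (fun j => y j - fsum M (fun l => G j l * p l)). split.
 - intros i Hi. rewrite (fsum_ext N (fun j => A i j * (y j - fsum M (fun l => G j l * p l))) (fun j => A i j * y j - A i j * fsum M (fun l => G j l * p l))) by (intros; ring).
   rewrite fsum_minus. fold (p i).
   assert (E : fsum N (fun j => A i j * fsum M (fun l => G j l * p l)) = p i).
   { unfold p.
     rewrite (fsum_ext N (fun m => A i m * y m) (fun m => fsum N (fun j => A i j * fsum M (fun l => G j l * A l m) * y m))).
     2:{ intros m Hm. rewrite fsum_scalr, HG; auto. }
     rewrite <- (fsum_swap N N (fun j m => A i j * fsum M (fun l => G j l * A l m) * y m)).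
     apply fsum_ext. intros j Hj. apply dbl. }
   rewrite E. ring.
 - intros j Hj. replace (y j - fsum M (fun l => G j l * p l) - y j) with (- fsum M (fun l => G j l * p l)) by ring.
   rewrite Rabs_Ropp. eapply Rle_trans. apply fsum_abs.
   apply Rle_trans with (fsum M (fun l => Rabs (G j l)) * / (2 * (INR N + 1) * (Gs + 1))).
   rewrite <- fsum_scalr. apply fsum_le. intros l Hl. rewrite Rabs_mult. apply Rmult_le_compat_l. apply Rabs_pos. apply Hy; auto.
   assert (fsum M (fun l => Rabs (G j l)) <= Gs).
   { unfold Gs. apply (fsum_term N (fun k => fsum M (fun l => Rabs (G k l)))); auto. intros; apply fsum_nonneg; intros; apply Rabs_pos. }
   assert (0 <= fsum M (fun l => Rabs (G j l))) by (apply fsum_nonneg; intros; apply Rabs_pos).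
   set (a := fsum M (fun l => Rabs (G j l))) in *. set (q := 2 * (INR N + 1)).
   assert (0 < q) by (unfold q; lra).
   replace (a * / (q * (Gs + 1))) with ((a / (Gs + 1)) * / q) by (field; lra).
   assert (Hb: a / (Gs+1) <= 1) by (apply Rmult_le_reg_r with (Gs+1); [lra|unfold Rdiv; rewrite Rmult_assoc, Rinv_l by lra; lra]).
   assert (0 < /q) by (apply Rinv_0_lt_compat; auto). nra.
Qed.


#[global] Instance atr_F (x : R) : Filter (at_right x).
Proof. destruct (at_right_proper_filter x); auto. Qed.

Definition lim_fsum0 := @lim_fsum (at_right 0) (atr_F 0).
Definition lim_pow0 := @lim_pow (at_right 0) (atr_F 0).
Definition lim_mult0 := @lim_mult (at_right 0) (atr_F 0).
Definition lim_plus0 := @lim_plus (at_right 0) (atr_F 0).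
Definition lim_minus0 := @lim_minus (at_right 0) (atr_F 0).
Definition lim_const0 := @lim_const (at_right 0) (atr_F 0).
Definition lim_comp0 := @lim_comp (at_right 0) (atr_F 0).

Lemma nonincr_ex (f : R -> R) : filterlim f (at_right 0) (locally (f 0)) ->
  (forall t, 0 < t -> exists d, is_derive f t d /\ d <= 0) -> forall t, 0 < t -> f t <= f 0.
Proof. intros Hl Hd. apply (nonincr_from0 f (Derive f) Hl).
 - intros t Ht. destruct (Hd t Ht) as [d [H1 H2]]. rewrite (is_derive_unique _ _ _ H1). exact H1.
 - intros t Ht. destruct (Hd t Ht) as [d [H1 H2]]. rewrite (is_derive_unique _ _ _ H1). exact H2.
Qed.

Section Final.
Variables (L M N : nat) (A : nat -> nat -> R) (b : nat -> R) (eta : R)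
  (r : R -> R) (u : R -> nat -> R) (r0 : R) (u0 : nat -> R) (c : R).
Hypothesis HL12 : L = 1%nat \/ L = 2%nat.
Hypothesis HN : (0 < N)%nat.
Hypothesis Heta : 0 < eta.
Hypothesis Hu0 : forall j, (j < N)%nat -> 0 < u0 j.
Hypothesis H0r : r 0 = r0.
Hypothesis H0u : forall j, (j < N)%nat -> u 0 j = u0 j.
Hypothesis Hlr : filterlim r (at_right 0) (locally (r 0)).
Hypothesis Hlu : forall j, (j < N)%nat -> filterlim (fun t => u t j) (at_right 0) (locally (u 0 j)).
Hypothesis Hr : forall t, 0 < t -> exists g,
     is_derive (fun s => wn_loss L M N A b s (u t)) (r t) g /\
     is_derive r t (- eta * g).
Hypothesis Hu : forall t j, 0 < t -> (j < N)%nat -> exists g,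
     is_derive (fun s => wn_loss L M N A b (r t) (upd (u t) j s)) (u t j) g /\
     is_derive (fun tau => u tau j) t (- 1 * g).
Hypothesis Hc : 0 < c.
Hypothesis Hcb : forall t j, 0 <= t -> (j < N)%nat -> c <= Rabs (u t j).
Variable G : nat -> nat -> R.
Hypothesis HG : forall i j, (i < M)%nat -> (j < N)%nat ->
    fsum N (fun k => A i k * fsum M (fun l => G k l * A l j)) = A i j.

Lemma HL : L <> 0%nat. Proof. lia. Qed.
Lemma Hnz t j : 0 < t -> (j < N)%nat -> u t j <> 0.
Proof. intros Ht Hj E. pose proof (Hcb t j (Rlt_le _ _ Ht) Hj). rewrite E, Rabs_R0 in H. lra. Qed.
Lemma HQpos t : 0 < t -> 0 < fsum N (fun k => u t k ^ 2).
Proof. intros Ht. apply Rlt_le_trans with (u t 0%nat ^ 2).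
 apply pow2_gt_0, Hnz; auto. apply (fsum_term N (fun k => u t k ^ 2)); [intros; apply pow2_ge_0|auto]. Qed.

Definition Q0 := fsum N (fun k => u 0 k ^ 2).
Lemma Q0_pos : 0 < Q0.
Proof. unfold Q0. apply Rlt_le_trans with (u 0 0%nat ^ 2).
 apply pow2_gt_0. rewrite H0u; auto. pose proof (Hu0 0%nat HN); lra.
 apply (fsum_term N (fun k => u 0 k ^ 2)); [intros; apply pow2_ge_0|auto]. Qed.

Lemma Qconst t : 0 < t -> fsum N (fun k => u t k ^ 2) = Q0.
Proof. intros Ht. apply (const_from0 (Qf N u)); auto.
 unfold Qf. apply lim_fsum0. intros k Hk. apply lim_pow0, Hlu; auto.
 intros s Hs. apply (Q_deriv L M N A b r u HL Hu HQpos s Hs). Qed.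

Definition rho0 := sqrt Q0.
Lemma rho0_pos : 0 < rho0. Proof. apply sqrt_lt_R0, Q0_pos. Qed.
Lemma Hrho t : 0 < t -> norm2 N (u t) = rho0.
Proof. intros Ht. unfold norm2, rho0. rewrite Qconst; auto. Qed.
Lemma rho0_sq : rho0 * rho0 = Q0. Proof. apply sqrt_sqrt. pose proof Q0_pos; lra. Qed.

Lemma ell_cont : filterlim (ell L M N A b r u rho0) (at_right 0) (locally (ell L M N A b r u rho0 0)).
Proof. unfold ell, loss. apply lim_mult0. apply lim_const0. apply lim_fsum0. intros i Hi.
 apply lim_pow0. apply lim_minus0; [|apply lim_const0]. apply lim_fsum0. intros j Hj.
 apply lim_mult0; [apply lim_const0|]. apply lim_pow0. apply lim_mult0; [|apply Hlu; auto].
 apply (lim_comp0 r (fun y => y / rho0) (r 0) Hlr). eexists. auto_derive. pose proof rho0_pos. lra. reflexivity.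
Qed.

Definition ell0 := ell L M N A b r u rho0 0.

Lemma ell_bound t : 0 < t -> ell L M N A b r u rho0 t <= ell0.
Proof. intros Ht. apply (nonincr_ex _ ell_cont); auto.
 intros s Hs. apply (ell_deriv L M N A b eta r u HL Hr Hu HQpos rho0 Hrho rho0_pos Heta s Hs). Qed.

Definition E0 := 2 * INR L * ell0.
Lemma ev_bound t i : 0 < t -> (i < M)%nat -> (ev L N A b (fun k => r t / rho0 * u t k) i) ^ 2 <= E0.
Proof. intros Ht Hi. pose proof (ell_bound t Ht) as H. unfold ell, E0 in *. rewrite loss_eq in H.
 assert (HLp : 0 < INR L) by (apply lt_0_INR; pose proof HL; lia).
 apply Rle_trans with (fsum M (fun i => ev L N A b (fun k => r t / rho0 * u t k) i ^ 2)).
 apply (fsum_term M (fun i => ev L N A b (fun k => r t / rho0 * u t k) i ^ 2)); auto. intros; apply pow2_ge_0.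
 apply Rmult_le_reg_l with (/ (2 * INR L)). apply Rinv_0_lt_compat; lra.
 replace (/ (2 * INR L) * (2 * INR L * ell0)) with ell0 by (field; lra). exact H.
Qed.

Lemma U_le t j : 0 < t -> (j < N)%nat -> Rabs (u t j) <= rho0.
Proof. intros Ht Hj. rewrite <- sqrt_Rsqr_abs. unfold rho0. apply sqrt_le_1_alt.
 rewrite <- (Qconst t Ht). unfold Rsqr. replace (u t j * u t j) with (u t j ^ 2) by ring.
 apply (fsum_term N (fun k => u t k ^ 2)); auto. intros; apply pow2_ge_0. Qed.

Lemma sum_yU t : 0 < t -> fsum N (fun j => u t j / rho0 * u t j) = rho0.
Proof. intros Ht. pose proof rho0_pos. rewrite (fsum_ext N _ (fun j => / rho0 * u t j ^ 2)).
 rewrite fsum_scal, Qconst, <- rho0_sq by auto. field. lra.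
 intros; unfold Rdiv; ring. Qed.

Lemma sum_y2 t : 0 < t -> fsum N (fun j => (u t j / rho0) ^ 2) = 1.
Proof. intros Ht. pose proof rho0_pos. rewrite (fsum_ext N _ (fun j => / (rho0 * rho0) * u t j ^ 2)).
 rewrite fsum_scal, Qconst, <- rho0_sq by auto. field. lra.
 intros; unfold Rdiv; field; lra. Qed.

Lemma delta_facts : INR N * / (2 * (INR N + 1)) <= / 2 /\ / (2 * (INR N + 1)) <= / 2.
Proof. assert (0 <= INR N) by apply pos_INR. split.
 apply Rmult_le_reg_r with (2 * (INR N + 1)). lra. rewrite Rmult_assoc, Rinv_l by lra. field_simplify; lra.
 apply Rinv_le_contravar; lra. Qed.

Definition Be := 1 + E0.
Definition Bb := fsum M (fun i => Rabs (b i)).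
Lemma Bb_le i : (i < M)%nat -> Rabs (b i) <= Bb.
Proof. intros Hi. apply (fsum_term M (fun i => Rabs (b i))); auto. intros; apply Rabs_pos. Qed.
Lemma Be_le t i : 0 < t -> (i < M)%nat -> Rabs (ev L N A b (fun k => r t / rho0 * u t k) i) <= Be.
Proof. intros. apply sq_bound, ev_bound; auto. Qed.
Lemma Bb_pos : 0 <= Bb. Proof. apply fsum_nonneg; intros; apply Rabs_pos. Qed.
Lemma E0_pos : 0 <= E0.
Proof. assert (HLp : 0 < INR L) by (apply lt_0_INR; pose proof HL; lia).
 assert (0 <= ell0). { unfold ell0, ell. rewrite loss_eq. apply Rmult_le_pos.
   apply Rlt_le, Rinv_0_lt_compat; lra. apply fsum_nonneg; intros; apply pow2_ge_0. }
 unfold E0. apply Rmult_le_pos; lra. Qed.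

Lemma caseA (R p e bi eps : R) : 0 < eps -> eps < Rabs p -> e = R * p - bi -> Rabs e <= Be -> Rabs bi <= Bb -> 0 <= R ->
  R <= (Be + Bb) / eps.
Proof. intros He Hp Ee H1 H2 HR. assert (Rabs (R * p) <= Be + Bb).
 { replace (R * p) with (e + bi) by (rewrite Ee; ring). eapply Rle_trans. apply Rabs_triang. lra. }
 rewrite Rabs_mult, Rabs_pos_eq in H by auto. apply Rmult_le_reg_r with eps; auto.
 unfold Rdiv. rewrite Rmult_assoc, Rinv_l, Rmult_1_r by lra. nra. Qed.

Lemma ln_le' x y : 0 < x -> x <= y -> ln x <= ln y.
Proof. intros Hx [H|H]. apply Rlt_le, ln_increasing; auto. subst; lra. Qed.

Lemma Be_pos : 1 <= Be. Proof. unfold Be. pose proof E0_pos. lra. Qed.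

Lemma bound_L1 : L = 1%nat -> exists K, forall t, 0 < t -> r t <= K.
Proof.
 intros HL1. destruct (kvec M N A G HG) as [eps [Heps Hk]].
 destruct delta_facts as [Hd1 Hd2]. set (dl := / (2 * (INR N + 1))) in *.
 assert (Hdl : 0 < dl) by (unfold dl; apply Rinv_0_lt_compat; pose proof (pos_INR N); lra).
 pose proof rho0_pos as Hrp. pose proof Q0_pos as HQp. pose proof Bb_pos as HBb. pose proof Be_pos as HBe.
 set (U0s := fsum N (fun j => Rabs (u 0 j))).
 set (D := 2 * eta * (rho0 * rho0)).
 assert (HD : 0 < D) by (unfold D; apply Rmult_lt_0_compat; nra).
 set (h0 := exp (r 0 ^ 2 / D)).
 set (HH := 4 * U0s * h0 / rho0).
 exists ((Be + Bb)/eps + (1 + D * Rabs (ln HH))).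
 intros t Ht. set (R := r t).
 assert (K1pos : 0 <= (Be+Bb)/eps) by (apply Rle_mult_inv_pos; lra).
 assert (K2pos : 0 <= D * Rabs (ln HH)) by (apply Rmult_le_pos; [lra|apply Rabs_pos]).
 destruct (Rle_or_lt R 0) as [HR|HR]. lra.
 set (y := fun j => u t j / rho0). set (p := fun i => fsum N (fun j => A i j * y j)).
 assert (Hev : forall i, ev L N A b (fun k => r t / rho0 * u t k) i = R * p i - b i).
 { intros i. unfold ev, p, y. rewrite HL1. f_equal. rewrite <- fsum_scal. apply fsum_ext. intros; simpl; unfold Rdiv, R; ring. }
 destruct (classic (exists i, (i < M)%nat /\ eps < Rabs (p i))) as [[i [Hi Hpi]]|Hno].
 - pose proof (caseA R (p i) _ (b i) eps Heps Hpi (Hev i) (Be_le t i Ht Hi) (Bb_le i Hi) (Rlt_le _ _ HR)). lra.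
 - assert (Hsmall : forall i, (i < M)%nat -> Rabs (p i) <= eps).
   { intros i Hi. destruct (Rle_or_lt (Rabs (p i)) eps); auto. exfalso; apply Hno; eauto. }
   destruct (Hk y Hsmall) as [k [Hker Hky]].
   assert (HZc : filterlim (Zf N eta r u rho0 k) (at_right 0) (locally (Zf N eta r u rho0 k 0))).
   { unfold Zf. apply lim_mult0. apply lim_fsum0; intros j Hj; apply lim_mult0; [apply lim_const0|apply Hlu; auto].
     apply (lim_comp0 (fun tau => r tau ^ 2 / (2 * eta * (rho0 * rho0))) exp).
     apply (lim_comp0 r (fun y => y ^ 2 / (2 * eta * (rho0 * rho0))) (r 0) Hlr).
     eexists; auto_derive; [fold D; lra|reflexivity].
     eexists; auto_derive; [auto|reflexivity]. }
   pose proof (const_from0 (Zf N eta r u rho0 k) HZc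
      (fun s Hs => Z_deriv L M N A b eta r u HL Hr Hu HQpos rho0 Hrho rho0_pos Heta k s HL1 Hker Hs) t Ht) as HZ.
   unfold Zf in HZ. fold D in HZ. fold h0 in HZ. fold R in HZ.
   set (ht := exp (R ^ 2 / D)) in HZ.
   assert (Hht : 0 < ht) by apply exp_pos. assert (Hh0 : 0 < h0) by apply exp_pos.
   assert (Hlow : rho0 / 2 <= fsum N (fun j => k j * u t j)).
   { rewrite (fsum_ext N _ (fun j => u t j / rho0 * u t j + (k j - y j) * u t j)) by (intros; unfold y; ring).
     rewrite fsum_plus, sum_yU by auto.
     assert (Rabs (fsum N (fun j => (k j - y j) * u t j)) <= INR N * (dl * rho0)).
     { apply fsum_abs_le. intros j Hj. rewrite Rabs_mult. apply Rmult_le_compat; try apply Rabs_pos; auto. apply U_le; auto. }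
     pose proof (Rle_abs (- fsum N (fun j => (k j - y j) * u t j))) as Hx. rewrite Rabs_Ropp in Hx. nra. }
   assert (Hup : fsum N (fun j => k j * u 0 j) <= 2 * U0s).
   { eapply Rle_trans. apply Rle_abs. eapply Rle_trans. apply fsum_abs. unfold U0s. rewrite <- fsum_scal.
     apply fsum_le. intros j Hj. rewrite Rabs_mult. apply Rmult_le_compat_r. apply Rabs_pos.
     assert (Rabs (y j) <= 1). { unfold y. unfold Rdiv. rewrite Rabs_mult, Rabs_inv, (Rabs_pos_eq rho0) by lra.
       apply Rmult_le_reg_r with rho0; auto. rewrite Rmult_assoc, Rinv_l, Rmult_1_r, Rmult_1_l by lra. apply U_le; auto. }
     pose proof (Hky j Hj). replace (k j) with ((k j - y j) + y j) by ring.
     eapply Rle_trans. apply Rabs_triang. lra. }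
   assert (Hhle : ht <= HH).
   { unfold HH. apply Rmult_le_reg_l with (rho0 / 2). apply Rdiv_lt_0_compat; lra.
     apply Rle_trans with (fsum N (fun j => k j * u t j) * ht). apply Rmult_le_compat_r; lra.
     rewrite HZ. apply Rle_trans with (2 * U0s * h0). apply Rmult_le_compat_r; lra.
     right. field. lra. }
   assert (Hln : R ^ 2 / D <= ln HH). { rewrite <- (ln_exp (R ^ 2 / D)). apply ln_le'; auto. }
   assert (R ^ 2 <= D * Rabs (ln HH)).
   { apply Rmult_le_reg_r with (/ D). apply Rinv_0_lt_compat; auto.
     replace (D * Rabs (ln HH) * / D) with (Rabs (ln HH)) by (field; lra).
     pose proof (Rle_abs (ln HH)). unfold Rdiv in Hln. lra. }
   pose proof (le_sq R). lra.
Qed.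

Lemma lnU_bound t j : 0 < t -> (j < N)%nat -> Rabs (ln (u t j ^ 2)) <= Rabs (ln (c ^ 2)) + Rabs (ln Q0).
Proof. intros Ht Hj. apply ln_bound. apply pow2_gt_0; lra.
 pose proof (Hcb t j (Rlt_le _ _ Ht) Hj). replace (u t j ^ 2) with (Rabs (u t j) ^ 2) by (unfold Rabs; destruct Rcase_abs; ring). nra.
 rewrite <- (Qconst t Ht). apply (fsum_term N (fun k => u t k ^ 2)); auto. intros; apply pow2_ge_0. Qed.

Lemma bound_L2 : L = 2%nat -> exists K, forall t, 0 < t -> r t <= K.
Proof.
 intros HL2. destruct (kvec M N A G HG) as [eps [Heps Hk]].
 destruct delta_facts as [Hd1 Hd2]. set (dl := / (2 * (INR N + 1))) in *.
 assert (Hdl : 0 < dl) by (unfold dl; apply Rinv_0_lt_compat; pose proof (pos_INR N); lra).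
 pose proof rho0_pos as Hrp. pose proof Q0_pos as HQp. pose proof Bb_pos as HBb. pose proof Be_pos as HBe.
 pose proof (pos_INR N) as HNp.
 set (D := eta * (rho0 * rho0)).
 assert (HD : 0 < D) by (unfold D; apply Rmult_lt_0_compat; nra).
 set (Lam := Rabs (ln (c ^ 2)) + Rabs (ln Q0)).
 assert (HLam : 0 <= Lam) by (unfold Lam; pose proof (Rabs_pos (ln (c^2))); pose proof (Rabs_pos (ln Q0)); lra).
 set (Yb := fsum N (fun j => 2 * Rabs (ln (u 0 j ^ 2))) + 2 * INR N * Rabs (r 0 ^ 2 / D)).
 assert (HYb : 0 <= Yb). { unfold Yb. pose proof (Rabs_pos (r 0 ^ 2 / D)).
   assert (0 <= fsum N (fun j => 2 * Rabs (ln (u 0 j ^ 2)))) by (apply fsum_nonneg; intros; pose proof (Rabs_pos (ln (u 0 k ^ 2))); lra). nra. }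
 set (K3 := 2 * D * (Yb + 2 * INR N * Lam)).
 assert (HK3 : 0 <= K3) by (unfold K3; apply Rmult_le_pos; nra).
 assert (K1pos : 0 <= (Be+Bb)/eps) by (apply Rle_mult_inv_pos; lra).
 exists ((Be + Bb)/eps + 1 + K3).
 intros t Ht. set (R := r t).
 set (y := fun j => (u t j / rho0) ^ 2). set (p := fun i => fsum N (fun j => A i j * y j)).
 assert (Hev : forall i, ev L N A b (fun k => r t / rho0 * u t k) i = R ^ 2 * p i - b i).
 { intros i. unfold ev, p, y. rewrite HL2. f_equal. rewrite <- fsum_scal. apply fsum_ext. intros; unfold R; simpl; unfold Rdiv; ring. }
 assert (HR2 : 0 <= R ^ 2) by apply pow2_ge_0. pose proof (le_sq R).
 destruct (classic (exists i, (i < M)%nat /\ eps < Rabs (p i))) as [[i [Hi Hpi]]|Hno].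
 - pose proof (caseA (R ^ 2) (p i) _ (b i) eps Heps Hpi (Hev i) (Be_le t i Ht Hi) (Bb_le i Hi) HR2). lra.
 - assert (Hsmall : forall i, (i < M)%nat -> Rabs (p i) <= eps).
   { intros i Hi. destruct (Rle_or_lt (Rabs (p i)) eps); auto. exfalso; apply Hno; eauto. }
   destruct (Hk y Hsmall) as [k [Hker Hky]].
   assert (HYc : filterlim (Yf N eta r u rho0 k) (at_right 0) (locally (Yf N eta r u rho0 k 0))).
   { unfold Yf. apply lim_plus0. apply lim_fsum0; intros j Hj; apply lim_mult0; [apply lim_const0|].
     apply (lim_comp0 (fun tau => u tau j ^ 2) ln). apply lim_pow0, Hlu; auto.
     assert (0 < u 0 j ^ 2) by (apply pow2_gt_0; rewrite H0u by auto; apply Rgt_not_eq, Hu0; auto).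
     exists (/ (u 0 j ^ 2)). apply is_derive_Reals, derivable_pt_lim_ln; auto.
     apply lim_mult0; [apply lim_const0|].
     apply (lim_comp0 r (fun y => y ^ 2 / (eta * (rho0 * rho0))) (r 0) Hlr).
     eexists; auto_derive; [fold D; lra|reflexivity]. }
   pose proof (const_from0 (Yf N eta r u rho0 k) HYc
      (fun s Hs => Y_deriv L M N A b eta r u HL Hr Hu HQpos rho0 Hrho rho0_pos Heta k s HL2 Hker (fun j Hj => Hnz s j Hs Hj) Hs) t Ht) as HY.
   unfold Yf in HY. fold D in HY. fold R in HY.
   assert (Hy1 : forall j, (j < N)%nat -> Rabs (y j) <= 1).
   { intros j Hj. unfold y. rewrite Rabs_pos_eq by apply pow2_ge_0. unfold Rdiv. rewrite Rpow_mult_distr.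
     rewrite <- Rinv_pow by lra. replace (rho0 ^ 2) with Q0 by (rewrite <- rho0_sq; ring).
     apply Rmult_le_reg_r with Q0; auto. rewrite Rmult_assoc, Rinv_l, Rmult_1_r, Rmult_1_l by lra.
     rewrite <- (Qconst t Ht). apply (fsum_term N (fun k => u t k ^ 2)); auto. intros; apply pow2_ge_0. }
   assert (Hk2 : forall j, (j < N)%nat -> Rabs (k j) <= 2).
   { intros j Hj. pose proof (Hky j Hj). pose proof (Hy1 j Hj). replace (k j) with ((k j - y j) + y j) by ring.
     eapply Rle_trans. apply Rabs_triang. lra. }
   assert (Hsk : / 2 <= fsum N k).
   { rewrite (fsum_ext N k (fun j => y j + (k j - y j))) by (intros; ring).
     rewrite fsum_plus. unfold y at 1. rewrite sum_y2 by auto.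
     assert (Rabs (fsum N (fun j => k j - y j)) <= INR N * dl) by (apply fsum_abs_le; auto).
     pose proof (Rle_abs (- fsum N (fun j => k j - y j))) as Hx. rewrite Rabs_Ropp in Hx. lra. }
   assert (Hsk2 : Rabs (fsum N k) <= INR N * 2) by (apply fsum_abs_le; auto).
   assert (A1 : Rabs (fsum N (fun j => k j * ln (u t j ^ 2))) <= INR N * (2 * Lam)).
   { apply fsum_abs_le. intros j Hj. rewrite Rabs_mult. apply Rmult_le_compat; try apply Rabs_pos; auto. apply lnU_bound; auto. }
   assert (A2 : Rabs (fsum N (fun j => k j * ln (u 0 j ^ 2))) <= fsum N (fun j => 2 * Rabs (ln (u 0 j ^ 2)))).
   { eapply Rle_trans. apply fsum_abs. apply fsum_le. intros j Hj. rewrite Rabs_mult. apply Rmult_le_compat_r. apply Rabs_pos. auto. }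
   assert (A3 : Rabs (fsum N k * (r 0 ^ 2 / D)) <= INR N * 2 * Rabs (r 0 ^ 2 / D)).
   { rewrite Rabs_mult. apply Rmult_le_compat_r. apply Rabs_pos. auto. }
   assert (Hmain : / 2 * (R ^ 2 / D) <= Yb + 2 * INR N * Lam).
   { apply Rle_trans with (fsum N k * (R ^ 2 / D)).
     apply Rmult_le_compat_r; auto. apply Rle_mult_inv_pos; auto.
     pose proof (Rle_abs (fsum N (fun j => k j * ln (u 0 j ^ 2)))).
     pose proof (Rle_abs (fsum N k * (r 0 ^ 2 / D))).
     pose proof (Rle_abs (- fsum N (fun j => k j * ln (u t j ^ 2)))) as Hx. rewrite Rabs_Ropp in Hx.
     unfold Yb. lra. }
   assert (R ^ 2 <= K3).
   { unfold K3. apply Rmult_le_reg_l with (/ (2 * D)). apply Rinv_0_lt_compat; lra.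
     replace (/ (2 * D) * (2 * D * (Yb + 2 * INR N * Lam))) with (Yb + 2 * INR N * Lam) by (field; lra).
     replace (/ (2 * D) * R ^ 2) with (/ 2 * (R ^ 2 / D)) by (field; lra). exact Hmain. }
   lra.
Qed.
End Final.


Theorem mainTheorem14 :
  forall (L M N : nat) (A : nat -> nat -> R) (b : nat -> R) (eta : R)
    (r : R -> R) (u : R -> nat -> R) (r0 : R) (u0 : nat -> R),
    (L = 1%nat \/ L = 2%nat) ->
    (0 < N)%nat ->
    0 < eta ->
    0 < r0 ->
    (forall j, (j < N)%nat -> 0 < u0 j) ->
    wn_flow L M N A b eta 1 r u r0 u0 ->
    (exists c, 0 < c /\
       forall t j, 0 <= t -> (j < N)%nat -> c <= Rabs (u t j)) ->
    exists C, forall t, 0 <= t -> r t <= C.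
Proof.
  intros L M N A b eta r u r0 u0 HL12 HN Heta Hr0 Hu0 Hflow [c [Hc Hcb]].
  destruct Hflow as [H0r [H0u [Hlr [Hlu [Hr Hu]]]]].
  destruct (LA.ginv M N A) as [G HG].
  assert (HK : exists K, forall t, 0 < t -> r t <= K).
  { destruct HL12 as [HL1|HL2].
    - exact (bound_L1 L M N A b eta r u u0 c (or_introl HL1) HN Heta Hu0 H0u Hlr Hlu Hr Hu Hc Hcb G HG HL1).
    - exact (bound_L2 L M N A b eta r u u0 c (or_intror HL2) HN Heta Hu0 H0u Hlr Hlu Hr Hu Hc Hcb G HG HL2). }
  destruct HK as [K HK]. exists (Rmax r0 K). intros t [Ht|Ht].
  - apply Rle_trans with K; [apply HK; auto|apply Rmax_r].
  - subst t. rewrite H0r. apply Rmax_l.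
Qed.
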